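(* Let $A=\{a_1,\dots,a_{3k}\}$ be an instance of 3-PARTITION with $a^2$ divisible by $7$, and let $G(A)$ be the bipartite network constructed from $A$ as described in the context. In any division of $G(A)$ with maximal bipartite modularity, every community contains at most one of the bicliques $K_1,\dots,K_k$.
   Context: An instance of 3-PARTITION is a set of $3k$ positive integers $A=\{a_1,\dots,a_{3k}\}$ such that $a=\sum_{i=1}^{3k}a_i=kb$ and $b/4<a_i<b/2$ for all $i$, for some integer $b$. The bipartite network $G(A)$ (vertices colored red/blue, every edge joining a red and a blue vertex) is built as follows. (1) Construct $k$ complete bipartite networks (bicliques) $K_1,\dots,K_k$, each with $a$ red and $a$ blue vertices. (2) For each $i=1,\dots,3k$ add a red vertex $x_i$ and a blue vertex $y_i$ (element vertices). (3) For each $i$, connect $x_i$ to $a_i$ blue vertices in each of the $k$ bicliques, in such a way that each blue vertex of every biclique is adjacent to exactly one red element vertex; similarly connect $y_i$ to $a_i$ red vertices in each biclique so that each red vertex of every biclique is adjacent to exactly one blue element vertex. (4) For each $i$, add the edge $x_iy_i$. (5) For each $i$, construct a star $X_i$ with one blue internal vertex and $a^2/7$ red leaves, and a star $Y_i$ with one red internal vertex and $a^2/7$ blue leaves. (6) For each $i$, connect $x_i$ to the internal vertex of $X_i$ and $y_i$ to the internal vertex of $Y_i$. A division of the vertex set is a partition into communities. With $m$ the number of edges, Barber's bipartite modularity is $Q_b(\mathcal{C})=\sum_{C\in\mathcal{C}}\left(\frac{m_C}{m}-\frac{R_CB_C}{m^2}\right)$, where $m_C$ is the number of edges inside $C$ and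 $R_C$ (resp. $B_C$) is the sum of degrees of red (resp. blue) vertices in $C$. A division with maximal bipartite modularity is one maximizing $Q_b$ over all divisions. A community ''contains'' a biclique $K_t$ if all vertices of $K_t$ lie in it. *)

(* Defs.v *)
From HB Require Import structures.
From mathcomp Require Import all_boot all_order all_algebra.
Set Implicit Arguments. Unset Strict Implicit. Unset Printing Implicit Defensive.
Import Order.TTheory GRing.Theory Num.Theory.

(* Barber's bipartite modularity of a division of a finite bipartite  *)
(* network.  [red v] is the colour of v (true = red, false = blue) and *)
(* [E u v] holds iff {u,v} is an edge with u red and v blue.  Each    *)
(* edge is thus counted once by the ordered pair (red end, blue end). *)
Section Modularity.
Variables (T : finType) (red : T -> bool) (E : T -> T -> bool).

Definition nedges : nat := #|[set p : T * T | E p.1 p.2]|.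
Definition degree (v : T) : nat := #|[set w : T | E v w || E w v]|.
Definition edges_in (C : {set T}) : nat :=
  #|[set p : T * T | [&& p.1 \in C, p.2 \in C & E p.1 p.2]]|.
Definition red_deg (C : {set T}) : nat := \sum_(v in C | red v) degree v.
Definition blue_deg (C : {set T}) : nat := \sum_(v in C | ~~ red v) degree v.

Definition bip_modularity (P : {set {set T}}) : rat :=
  \sum_(C in P) (((edges_in C)%:R / (nedges%:R)
                 - (red_deg C * blue_deg C)%:R / (nedges%:R ^+ 2)))%R.

Definition division (P : {set {set T}}) : bool := partition P [set: T].

Definition max_modularity_division (P : {set {set T}}) : Prop :=
  division P /\ forall P', division P' -> (bip_modularity P' <= bip_modularity P)%R.
End Modularity.

(* The network G(A).  Vertices:                                       *)
(*  - biclique vertices (t, j, r), t < k, j < a, r = true red / false *)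
(*    blue;                                                           *)
(*  - element vertices (i, r): r = true is x_i (red), false is y_i    *)
(*    (blue);                                                         *)
(*  - star centres (i, r): r = true is the centre of Y_i (red),       *)
(*    r = false the centre of X_i (blue);                             *)
(*  - star leaves (i, l, r), l < L = a^2/7: r = true is a (red) leaf  *)
(*    of X_i, r = false a (blue) leaf of Y_i.                         *)
Notation GV k a L :=
  ((('I_k * 'I_a * bool) + ('I_(3 * k) * bool)) + ('I_(3 * k) * bool)
   + ('I_(3 * k) * 'I_L * bool))%type.

Definition bic {k a L : nat} (t : 'I_k) (j : 'I_a) (r : bool) : GV k a L :=
  inl (inl (inl (t, j, r))).

Section Network.
Variables (k a L : nat).
(* fB t j = index i of the red element vertex x_i adjacent to the blue
   vertex j of biclique K_t; gR t j = index i of the blue element vertex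
   y_i adjacent to the red vertex j of K_t. *)
Variables (fB gR : 'I_k -> 'I_a -> 'I_(3 * k)).

Definition GA_red (v : GV k a L) : bool :=
  match v with
  | inl (inl (inl (_, _, r))) => r
  | inl (inl (inr (_, r))) => r
  | inl (inr (_, r)) => r
  | inr (_, _, r) => r
  end.

Definition GA_edge (u v : GV k a L) : bool :=
  match u, v with
  (* (1) bicliques *)
  | inl (inl (inl (t, _, true))), inl (inl (inl (t', _, false))) => t == t'
  (* (3) x_i -- blue biclique vertices *)
  | inl (inl (inr (i, true))), inl (inl (inl (t, j, false))) => fB t j == i
  (* (3) red biclique vertices -- y_i *)
  | inl (inl (inl (t, j, true))), inl (inl (inr (i, false))) => gR t j == i
  (* (4) x_i -- y_i *)
  | inl (inl (inr (i, true))), inl (inl (inr (i', false))) => i == i'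
  (* (5) star X_i : red leaves -- blue centre *)
  | inr (i, _, true), inl (inr (i', false)) => i == i'
  (* (5) star Y_i : red centre -- blue leaves *)
  | inl (inr (i, true)), inr (i', _, false) => i == i'
  (* (6) x_i -- centre of X_i *)
  | inl (inl (inr (i, true))), inl (inr (i', false)) => i == i'
  (* (6) centre of Y_i -- y_i *)
  | inl (inr (i, true)), inl (inl (inr (i', false))) => i == i'
  | _, _ => false
  end.

Definition contains_biclique (C : {set GV k a L}) (t : 'I_k) : bool :=
  [forall j : 'I_a, forall r : bool, bic t j r \in C].
End Network.

Definition three_partition_instance (k b : nat) (A : 'I_(3 * k) -> nat) : Prop :=
  (forall i, 0 < A i) /\ \sum_(i < 3 * k) A i = k * b /\
  (forall i, b < 4 * A i /\ 2 * A i < b).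

Definition valid_assignment (k a : nat) (A : 'I_(3 * k) -> nat)
    (f : 'I_k -> 'I_a -> 'I_(3 * k)) : Prop :=
  forall (t : 'I_k) (i : 'I_(3 * k)), #|[set j : 'I_a | f t j == i]| = A i.

(* Main.v *)
Require Import Defs.
From mathcomp Require Import all_boot all_order all_algebra.
From mathcomp Require Import zify ring lra.
Set Implicit Arguments. Unset Strict Implicit. Unset Printing Implicit Defensive.
Import Order.TTheory GRing.Theory Num.Theory.


Lemma arith (eC e1 e2 R1 R2 B1 B2 m A : nat) : eC <= e1+e2+A*2 ->
  A*A <= R1 -> A*A <= R2 -> A*A <= B1 -> A*A <= B2 -> m < A*(A*A) -> 0 < A ->
  eC* m + R1*B1 + R2*B2 < (e1+e2)* m + (R1+R2)*(B1+B2).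
Proof.
move=> he h1 h2 h3 h4 hm hA.
have p1 : (A*A)*(A*A) <= R1*B2 := leq_mul h1 h4.
have p2 : (A*A)*(A*A) <= R2*B1 := leq_mul h2 h3.
have p3 : eC* m <= (e1+e2+A*2)* m := leq_mul he (leqnn _).
have p4 : A*2* m < A*2*(A*(A*A)) by rewrite ltn_pmul2l //; lia.
nia.
Qed.

Lemma mbound (k b a L m : nat) : a = k*b -> 2 <= k -> 3 <= b -> 7*L <= a*a ->
  m <= k*(a*a) + (k*a*2 + 3*k*2 + 3*k*2 + 3*k*L*2) -> m < a*(a*a).
Proof.
move=> Ha Hk Hb HL Hm.
have h1 : k*(7*L) <= k*(a*a) by rewrite leq_mul2l HL orbT.
have h2 : 3*k*(a*a) <= a*(a*a) by rewrite Ha; nia.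
have h6 : 6 <= a by rewrite Ha; nia.
have h3 : 14*a + 84 < 8*(a*a) by nia.
have h4 : k*(14*a+84) < k*(8*(a*a)) by rewrite ltn_pmul2l //; lia.
nia.
Qed.

Section RS.
Local Open Scope ring_scope.
Lemma ratstep (eC e1 e2 R1 R2 B1 B2 m : nat) : (0 < m)%N ->
  (eC* m + R1*B1 + R2*B2 < (e1+e2)* m + (R1+R2)*(B1+B2))%N ->
  ((eC%:R / m%:R - ((R1+R2)*(B1+B2))%:R / m%:R^+2 <
   (e1%:R/m%:R - (R1*B1)%:R/m%:R^+2) + (e2%:R/m%:R - (R2*B2)%:R/m%:R^+2) :> rat)%R).
Proof.
move=> hm key.
have M0 : (0 : rat) < m%:R by rewrite ltr0n.
have E1 : forall x y : rat, x / m%:R - y / m%:R^+2 = (x * m%:R - y) / m%:R^+2.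
  by move=> x y; field; rewrite gt_eqF.
rewrite !E1 -mulrDl ltr_pM2r ?invr_gt0 ?exprn_gt0 //.
move: key; rewrite -(ltr_nat rat) !natrD !natrM.
lra.
Qed.
End RS.


Lemma not_other (T' : finType) (P : {set {set T'}}) (C D : {set T'}) (x : T') :
  trivIset P -> C \in P -> D \subset C -> x \in D -> D \notin P :\ C.
Proof.
move=> tP CP DC xD; apply/negP => /setD1P [DneC DP].
move/trivIsetP: tP => /(_ D C DP CP DneC) /disjoint_setI0 H.
have : x \in D :&: C by rewrite inE xD (subsetP DC).
by rewrite H inE.
Qed.

Lemma refine (T' : finType) (P : {set {set T'}}) (C K : {set T'}) (x1 x2 : T') :
  partition P [set: T'] -> C \in P -> x1 \in C :&: K -> x2 \in C :\: K ->
  partition ((C :&: K) |: ((C :\: K) |: (P :\ C))) [set: T'] /\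
  (forall F : {set T'} -> rat,
     \sum_(B in (C :&: K) |: ((C :\: K) |: (P :\ C))) F B
     = F (C :&: K) + (F (C :\: K) + \sum_(B in P :\ C) F B))%R.
Proof.
move=> /and3P [/eqP cov tP n0] CP x1in x2in.
have n1 : C :\: K \notin P :\ C := not_other tP CP (subsetDl C K) x2in.
have n2 : C :&: K \notin (C :\: K) |: (P :\ C).
  rewrite in_setU1 negb_or (not_other tP CP (subsetIl C K) x1in) andbT.
  apply/eqP => e; move: (x1in); rewrite e => /setDP [_ h].
  by move: x1in => /setIP [_ h']; rewrite h' in h.
have sumE (R : Type) (idx : R) (op : Monoid.com_law idx) (F : {set T'} -> R) :
  \big[op/idx]_(B in (C :&: K) |: ((C :\: K) |: (P :\ C))) F B
  = op (F (C :&: K)) (op (F (C :\: K)) (\big[op/idx]_(B in P :\ C) F B)).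
  by rewrite big_setU1 // big_setU1.
split; last by move=> F; apply: sumE.
have cov' : cover ((C :&: K) |: ((C :\: K) |: (P :\ C))) = [set: T'].
  by rewrite /cover sumE -cov /cover (big_setD1 _ CP) /= setUA setID.
apply/and3P; split.
- by rewrite cov'.
- rewrite /trivIset sumE cov' -cov; move: tP; rewrite /trivIset (big_setD1 _ CP) /=.
  by rewrite -{1}(cardsID K C) addnA.
- rewrite !in_setU1 !negb_or in_setD1 (negbTE n0) andbF andbT.
  apply/andP; split; apply/eqP => e.
  + by move: x1in; rewrite -e inE.
  + by move: x2in; rewrite -e inE.
Qed.

Section S.
Variables (k a L : nat) (fB gR : 'I_k -> 'I_a -> 'I_(3 * k)).
Local Notation T := (GV k a L).
Local Notation E := (GA_edge (L:=L) fB gR).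
Local Notation red := (GA_red (L:=L) (k:=k) (a:=a)).

Definition xv (i : 'I_(3*k)) : T := inl (inl (inr (i, true))).
Definition yv (i : 'I_(3*k)) : T := inl (inl (inr (i, false))).
Definition cX (i : 'I_(3*k)) : T := inl (inr (i, false)).
Definition cY (i : 'I_(3*k)) : T := inl (inr (i, true)).

Definition enc (p : T * T) : T + ('I_k * 'I_a * 'I_a) :=
 match p with
 | (inl (inl (inl (t, j, true))), inl (inl (inl (_, j', false)))) => inr (t, j, j')
 | (inl (inl (inr (_, true))), inl (inl (inl (_, _, false)))) => inl p.2
 | (inl (inr (_, true)), inr (_, _, false)) => inl p.2
 | (inl (inl (inr (_, true))), inl (inr (_, false))) => inl p.2
 | _ => inl p.1
 end.

Definition dec (z : T + ('I_k * 'I_a * 'I_a)) : T * T :=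
 match z with
 | inr (t, j, j') => (bic t j true, bic t j' false)
 | inl v => match v with
   | inl (inl (inl (t, j, false))) => (xv (fB t j), v)
   | inl (inl (inl (t, j, true))) => (v, yv (gR t j))
   | inl (inl (inr (i, true))) => (v, yv i)
   | inl (inl (inr (i, false))) => (v, v)
   | inl (inr (i, true)) => (v, yv i)
   | inl (inr (i, false)) => (xv i, v)
   | inr (i, l, true) => (v, cX i)
   | inr (i, l, false) => (cY i, v)
   end
 end.

Lemma dec_enc p : E p.1 p.2 -> dec (enc p) = p.
Proof.
case: p => [[[[[[t j] []]|[i []]]|[i []]]|[[i l] []]] [[[[[t' j'] []]|[i' []]]|[i' []]]|[[i' l'] []]]] //=;
 move/eqP=> H; subst => //.
Qed.

Definition isK (t1 : 'I_k) (v : T) : bool :=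
  match v with inl (inl (inl (t, _, _))) => t == t1 | _ => false end.

Definition encX (j0 : 'I_a) (p : T * T) : 'I_a * bool :=
  match p with
  | (inl (inl (inl (_, j, _))), _) => (j, true)
  | (_, inl (inl (inl (_, j, _)))) => (j, false)
  | _ => (j0, true)
  end.
Definition decX (t1 : 'I_k) (z : 'I_a * bool) : T * T :=
  match z with
  | (j, true) => (bic t1 j true, yv (gR t1 j))
  | (j, false) => (xv (fB t1 j), bic t1 j false)
  end.

Lemma decX_encX t1 j0 p : E p.1 p.2 -> isK t1 p.1 != isK t1 p.2 -> decX t1 (encX j0 p) = p.
Proof.
case: p => [[[[[[t j] []]|[i []]]|[i []]]|[[i l] []]] [[[[[t' j'] []]|[i' []]]|[i' []]]|[[i' l'] []]]] //=.
all: try (by move/eqP=> ->; rewrite eqxx).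
all: move/eqP=> H; subst=> //=.
- by case: (t =P t1) => [->|].
- by case: (t' =P t1) => [->|].
Qed.

Lemma nedges_le : nedges E <= #|{: T + ('I_k * 'I_a * 'I_a)}|.
Proof.
have inj : {in [set p : T * T | E p.1 p.2] &, injective enc}.
  apply: (can_in_inj (g := dec)) => p; rewrite inE; exact: dec_enc.
rewrite /nedges -(card_in_imset inj); exact: max_card.
Qed.

Lemma cross_le t1 (j0 : 'I_a) :
  #|[set p : T * T | E p.1 p.2 && (isK t1 p.1 != isK t1 p.2)]| <= a * 2.
Proof.
have inj : {in [set p : T * T | E p.1 p.2 && (isK t1 p.1 != isK t1 p.2)] &, injective (encX j0)}.
  apply: (can_in_inj (g := decX t1)) => p; rewrite inE => /andP [h1 h2].
  exact: decX_encX.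
rewrite -(card_in_imset inj); apply: leq_trans (max_card _) _.
by rewrite card_prod card_ord card_bool.
Qed.

Lemma deg_ge t j r : a <= degree E (bic t j r).
Proof.
have inj : injective (fun j' : 'I_a => (bic t j' (~~ r) : T)) by move=> x y [].
rewrite /degree; apply: leq_trans (subset_leq_card (_ : [set (bic t j' (~~ r) : T) | j' : 'I_a] \subset _)).
  by rewrite card_imset // card_ord.
apply/subsetP => v /imsetP [j' _ ->]; rewrite inE; clear inj; case: r => /=; by rewrite /bic /= ?eqxx ?orbT.
Qed.

Lemma sum_lb (S : {set T}) (pr : pred T) t r :
  (forall j, bic t j r \in S) -> (forall j, pr (bic t j r)) ->
  a * a <= \sum_(v in S | pr v) degree E v.
Proof.
move=> HS Hpr.
apply: (@leq_trans (\sum_(v in [set (bic t j r : T) | j : 'I_a]) a)).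
  rewrite sum_nat_const card_imset ?card_ord //; by move=> x y [].
rewrite [X in _ <= X]big_mkcond [X in X <= _]big_mkcond /=.
apply: leq_sum => v _; case: ifP => // /imsetP [j _ ->].
by rewrite HS Hpr /=; exact: deg_ge.
Qed.

Lemma main_gen (b : nat) : a = k * b -> 2 <= k -> 3 <= b -> 7 * L <= a * a ->
  forall P, max_modularity_division red E P ->
  forall C, C \in P -> forall t1 t2,
  contains_biclique C t1 -> contains_biclique C t2 -> t1 != t2 -> False.
Proof.
move=> Ha Hk Hb HL P [HdivP Hmax] C HC t1 t2 H1 H2 Hne.
have a_pos : 0 < a by rewrite Ha; nia.
pose j0 := Ordinal a_pos.
have inC : forall t j r, contains_biclique C t -> bic t j r \in C.
  by move=> t j r /forallP/(_ j)/forallP/(_ r).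
pose K := [set v : T | isK t1 v].
have in1 : forall j r, bic t1 j r \in C :&: K.
  by move=> j r; rewrite !inE inC //= /isK /bic /= eqxx.
have in2 : forall j r, bic t2 j r \in C :\: K.
  by move=> j r; rewrite !inE inC // andbT /isK /bic /= eq_sym.
have [HP' sumE] := refine HdivP HC (in1 j0 true) (in2 j0 true).
have := Hmax _ HP'.
rewrite /bip_modularity sumE (big_setD1 _ HC) /= addrA lerD2r.
apply/negP; rewrite -ltNge.
have hR : red_deg red E C = red_deg red E (C :&: K) + red_deg red E (C :\: K).
  by rewrite /red_deg (big_setIDcond _ _ K).
have hB : blue_deg red E C = blue_deg red E (C :&: K) + blue_deg red E (C :\: K).
  by rewrite /blue_deg (big_setIDcond _ _ K).
have lR1 : a * a <= red_deg red E (C :&: K) := sum_lb (t:=t1) (r:=true) (fun j => in1 j true) (fun j => isT).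
have lB1 : a * a <= blue_deg red E (C :&: K) := sum_lb (t:=t1) (r:=false) (fun j => in1 j false) (fun j => isT).
have lR2 : a * a <= red_deg red E (C :\: K) := sum_lb (t:=t2) (r:=true) (fun j => in2 j true) (fun j => isT).
have lB2 : a * a <= blue_deg red E (C :\: K) := sum_lb (t:=t2) (r:=false) (fun j => in2 j false) (fun j => isT).
have he : edges_in E C <= edges_in E (C :&: K) + edges_in E (C :\: K) + a * 2.
  have sub : [set p : T * T | [&& p.1 \in C, p.2 \in C & E p.1 p.2]] \subset
    ([set p : T * T | [&& p.1 \in C :&: K, p.2 \in C :&: K & E p.1 p.2]] :|:
     [set p : T * T | [&& p.1 \in C :\: K, p.2 \in C :\: K & E p.1 p.2]]) :|:
     [set p : T * T | E p.1 p.2 && (isK t1 p.1 != isK t1 p.2)].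
    apply/subsetP => p; rewrite /K !inE => /and3P [h1 h2 h3]; rewrite h1 h2 h3 /=.
    by case: (isK t1 p.1); case: (isK t1 p.2).
  rewrite /edges_in; apply: leq_trans (subset_leq_card sub) _.
  apply: leq_trans (leq_card_setU _ _).1 _.
  rewrite leq_add //; first exact: (leq_card_setU _ _).1.
  exact: cross_le j0.
have hm : nedges E <= k * (a * a) + (k * a * 2 + 3 * k * 2 + 3 * k * 2 + 3 * k * L * 2).
  apply: leq_trans (nedges_le) _; rewrite !card_sum !card_prod !card_ord !card_bool.
  nia.
have m_lt := mbound Ha Hk Hb HL hm.
have m_pos : 0 < nedges E.
  rewrite /nedges card_gt0; apply/set0Pn; exists (bic t1 j0 true, bic t1 j0 false).
  by rewrite inE /= /bic /= eqxx.
rewrite hR hB; apply: ratstep => //.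
exact: arith he lR1 lR2 lB1 lB2 m_lt a_pos.
Qed.

End S.

Unset Implicit Arguments.
Theorem lemma2 (k b : nat) (A : 'I_(3 * k) -> nat)
    (fB gR : 'I_k -> 'I_(k * b) -> 'I_(3 * k)) :
  three_partition_instance b A ->
  (7 %| (k * b) ^ 2)%N ->
  valid_assignment A fB -> valid_assignment A gR ->
  forall P : {set {set GV k (k * b) ((k * b) ^ 2 %/ 7)}},
    max_modularity_division (GA_red (L:=(k * b) ^ 2 %/ 7))
      (GA_edge (L:=(k * b) ^ 2 %/ 7) fB gR) P ->
    forall C, C \in P ->
    forall t1 t2 : 'I_k,
      contains_biclique C t1 -> contains_biclique C t2 -> t1 = t2.
Proof.
move=> [Apos [Asum Ab]] _ _ _ P HP C HC t1 t2 H1 H2.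
case: (eqVneq t1 t2) => // Hne.
exfalso.
have Hk : 2 <= k.
  case: k t1 t2 Hne {fB gR A Apos Asum Ab P HP C HC H1 H2} => [[]//|[|k']] t1 t2 Hne //.
  by move: Hne; rewrite (ord1 t1) (ord1 t2) eqxx.
have i0 : 0 < 3 * k by lia.
have [h1 h2] := Ab (Ordinal i0).
have h3 := Apos (Ordinal i0).
have Hb : 3 <= b by lia.
have HL : 7 * ((k * b) ^ 2 %/ 7) <= k * b * (k * b).
  rewrite mulnC; apply: leq_trans (leq_divM _ 7) _; by rewrite expnS expn1.
exact: (main_gen (erefl (k * b)) Hk Hb HL HP HC H1 H2 Hne).
Qed.

Print Assumptions lemma2.
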